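(* Let $T$ be the regular rooted tree of valence $p\geq 2$ with the embedded wire diffeology $\mathcal{D}_T$, and equip $\operatorname{Aut}T$ with the functional diffeology. Then the D-topology of $\operatorname{Aut}T$ with respect to this diffeology is the discrete topology.
   Context: Fix a finite alphabet $A$ with $|A|=p\geq 2$. The vertices of $T$ are the finite words over $A$ (the root is the empty word); two vertices are joined by an edge iff they have the form $a_1\dots a_n$ and $a_1\dots a_na_{n+1}$. As a topological space, $T$ is the 1-dimensional CW complex obtained by realizing each edge as a copy of $[0,1]$, with its usual topology. $\operatorname{Aut}T$ is the group of bijections of the vertex set fixing the root and preserving adjacency; each is regarded as a homeomorphism of the geometric realization mapping each edge affinely onto its image edge. A diffeology on a set $X$ is a collection of maps $U\to X$ (''plots''), $U$ ranging over open subsets of all $\mathbb{R}^n$, containing all constant maps, closed under precomposition with smooth maps, and satisfying the sheaf condition. The embedded wire diffeology $\mathcal{D}_T$ is the diffeology on $T$ generated by (i.e. the smallest diffeology containing) all maps $\gamma:\mathbb{R}\to T$ that are injective, continuous, and homeomorphisms onto their images. A map between diffeological spaces is smooth if it sends plots to plots. The functional diffeology on $C^\infty(T,T)$ is the coarsest diffeology such that the evaluation map $C^\infty(T,T)\times T\to T$ is smooth (with the product diffeology, the coarsest making projections smooth); $\operatorname{Aut}T\subseteq C^\infty(T,T)$ carries the subset diffeology. The D-topology of a diffeological space $X$ is the topology in which $S\subseteq X$ is open iff $P^{-1}(S)$ is open for every plot $P$ of $X$. *)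

(* Defs.v *)
From HB Require Import structures.
From mathcomp Require Import all_boot all_order all_algebra.
From mathcomp Require Import all_classical all_reals all_analysis.
Set Implicit Arguments. Unset Strict Implicit. Unset Printing Implicit Defensive.
Import Order.TTheory GRing.Theory Num.Theory.
Import numFieldNormedType.Exports.
Local Open Scope classical_set_scope.
Local Open Scope ring_scope.

Section Diffeology.
Variable R : realType.

Fixpoint Ck (m k : nat) (j : nat) (U : set 'rV[R]_m) (f : 'rV[R]_m -> 'rV[R]_k)
  : Prop :=
  match j with
  | 0%N => forall x, U x -> {for x, continuous f}
  | j'.+1 => forall i : 'I_m,
      (forall x, U x -> derivable f x (delta_mx ord0 i)) /\
      Ck j' U (fun x => 'D_(delta_mx ord0 i) f x)
  end.

Definition smooth_on (m k : nat) (U : set 'rV[R]_m) (f : 'rV[R]_m -> 'rV[R]_k)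
  := forall j, Ck j U f.

(* A "parametrization family" on X: for each n, a predicate on pairs (U, P),
   P : U -> X represented by a total map whose values off U are irrelevant. *)
Definition pfam (X : Type) := forall n : nat, set 'rV[R]_n -> ('rV[R]_n -> X) -> Prop.

Definition is_diffeology (X : Type) (D : pfam X) : Prop :=
  [/\ (forall n U P, D n U P -> open U),
      (forall n (U : set 'rV[R]_n) (x : X), open U -> D n U (fun _ => x)),
      (forall n m (U : set 'rV[R]_n) (V : set 'rV[R]_m) P
              (f : 'rV[R]_m -> 'rV[R]_n) Q,
          D n U P -> open V -> smooth_on V f -> (forall y, V y -> U (f y)) ->
          (forall y, V y -> Q y = P (f y)) -> D m V Q) &
      (forall n (U : set 'rV[R]_n) P, open U ->
          (forall x, U x -> exists V, [/\ open V, V x, V `<=` U & D n V P]) ->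
          D n U P)].

Definition gen_diffeology (X : Type) (G : (R -> X) -> Prop) : pfam X :=
  fun n U P => forall D : pfam X, is_diffeology D ->
    (forall g, G g -> D 1%N setT (fun v => g (v ord0 ord0))) -> D n U P.

Definition dsmooth (X Y : Type) (DX : pfam X) (DY : pfam Y) (f : X -> Y) :=
  forall n U P, DX n U P -> DY n U (fun u => f (P u)).

Definition prod_diffeology (X Y : Type) (DX : pfam X) (DY : pfam Y)
  : pfam (X * Y) :=
  fun n U P => [/\ open U, DX n U (fun u => (P u).1) & DY n U (fun u => (P u).2)].

Definition sub_diffeology (X : Type) (Q : X -> Prop) (D : pfam X)
  : pfam {x : X | Q x} :=
  fun n U P => D n U (fun u => proj1_sig (P u)).

Definition D_open (X : Type) (D : pfam X) (S : set X) : Prop :=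
  forall n U P, D n U P -> open [set u | U u /\ S (P u)].

Variable A : finType.

Lemma unit_in : (0 : R) < 1 <= (1 : R).
Proof. by rewrite ltr01 lexx. Qed.

(* A point of the realization is the root (None) or a point (w, a, t) on the
   edge from w to w++[a], at parameter t in (0,1] (t = 1 is the vertex w++[a]). *)
Definition Tpt := option (seq A * A * {t : R | 0 < t <= 1}).

Definition vtx (w : seq A) : Tpt :=
  match w with
  | [::] => None
  | x :: s => Some (belast x s, last x s, exist _ 1 unit_in)
  end.

Definition epoint (w : seq A) (a : A) (t : R) : Tpt :=
  match @idP (0 < t <= 1) with
  | ReflectT h => Some (w, a, exist _ t h)
  | ReflectF _ => vtx w
  end.

(* CW (weak) topology: S is open iff its trace on each closed edge is open *)
Definition T_open (S : set Tpt) : Prop :=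
  forall w a, exists O : set R, open O /\
    (forall t, 0 <= t <= 1 -> (O t <-> S (epoint w a t))).

Definition T_continuous (g : R -> Tpt) : Prop :=
  forall S, T_open S -> open (g @^-1` S).

Definition T_embedding_onto_image (g : R -> Tpt) : Prop :=
  forall O : set R, open O -> exists S, T_open S /\ (forall x, O x <-> S (g x)).

Definition wire (g : R -> Tpt) : Prop :=
  injective g /\ T_continuous g /\ T_embedding_onto_image g.

Definition D_T : pfam Tpt := gen_diffeology wire.

Definition Cinf := {f : Tpt -> Tpt | dsmooth D_T D_T f}.

Definition ev (p : Cinf * Tpt) : Tpt := proj1_sig p.1 p.2.

(* coarsest diffeology making evaluation smooth: a parametrization is a plot
   iff it is a plot of some diffeology for which ev is smooth *)
Definition D_fun : pfam Cinf :=
  fun n U P => exists D : pfam Cinf,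
    [/\ is_diffeology D, D n U P & dsmooth (prod_diffeology D D_T) D_T ev].

Definition adj (v w : seq A) : Prop :=
  (exists a, w = rcons v a) \/ (exists a, v = rcons w a).

Definition is_tree_aut (g : seq A -> seq A) : Prop :=
  [/\ bijective g, g [::] = [::] & forall v w, adj v w <-> adj (g v) (g w)].

(* the homeomorphism of the realization induced by g: edges mapped affinely *)
Definition realize (g : seq A -> seq A) (x : Tpt) : Tpt :=
  match x with
  | None => None
  | Some (w, a, t) =>
      match rev (g (rcons w a)) with
      | b :: r => Some (rev r, b, t)
      | [::] => None
      end
  end.

Definition is_aut_map (f : Cinf) : Prop :=
  exists g, is_tree_aut g /\ forall x, proj1_sig f x = realize g x.

Definition AutT := {f : Cinf | is_aut_map f}.

Definition D_aut : pfam AutT := @sub_diffeology Cinf is_aut_map D_fun.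

End Diffeology.

(* Main.v *)
Require Import Defs.
From HB Require Import structures.
From mathcomp Require Import all_boot all_order all_algebra.
From mathcomp Require Import all_classical all_reals all_analysis.
Set Implicit Arguments. Unset Strict Implicit. Unset Printing Implicit Defensive.
Import Order.TTheory GRing.Theory Num.Theory.
Import numFieldNormedType.Exports.
Local Open Scope classical_set_scope.
Local Open Scope ring_scope.

Lemma open_preim (T U : topologicalType) (V : set T) (f : T -> U) (W : set U) :
  open V -> (forall y, V y -> {for y, continuous f}) -> open W ->
  open [set y | V y /\ W (f y)].
Proof.
move=> oV cf oW; rewrite openE => y [Vy Wy].
have nV : nbhs y V by apply: open_nbhs_nbhs.
have nW : nbhs y (f @^-1` W).
  by apply: (cf y Vy); apply: open_nbhs_nbhs.
by apply: filterS (filterI nV nW) => z [].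
Qed.

Section Main.
Variables (R : realType) (A : finType).

Definition Ccont : pfam R (Tpt R A) := fun n U P =>
  open U /\ forall S, T_open S -> open [set u | U u /\ S (P u)].

Lemma Ccont_diffeo : is_diffeology Ccont.
Proof.
split.
- by move=> n U P [].
- move=> n U x oU; split=> // S _.
  have [Sx|nSx] := pselect (S x).
    by have -> : [set u | U u /\ S x] = U by apply/seteqP; split=> u //= [].
  by have -> : [set u | U u /\ S x] = set0 by apply/seteqP; split=> u //= [].
- move=> n m U V P f Q [oU cP] oV sf fVU QE; split=> // S oS.
  have -> : [set y | V y /\ S (Q y)] = [set y | V y /\ [set u | U u /\ S (P u)] (f y)].
    apply/seteqP; split=> y /= [Vy].
      by rewrite QE // => Sy; split=> //; split=> //; apply: fVU.
    by move=> [_ Sy]; rewrite QE.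
  apply: open_preim => //; last exact: cP.
  by move=> y Vy; apply: (sf 0%N y Vy).
- move=> n U P oU loc; split=> // S oS.
  rewrite openE => u [Uu Su].
  have [V [oV Vu VU [_ cV]]] := loc u Uu.
  have : nbhs u [set y | V y /\ S (P y)].
    by apply: open_nbhs_nbhs; split=> //; apply: cV.
  by apply: filterS => y [Vy Sy]; split=> //; apply: VU.
Qed.

Lemma D_T_cont n (U : set 'rV[R]_n) P : @D_T R A n U P -> Ccont U P.
Proof.
move=> H; apply: H; first exact: Ccont_diffeo.
move=> g [_ [gc _]]; split; first exact: openT.
move=> S oS.
have -> : [set u : 'rV[R]_1 | setT u /\ S (g (u ord0 ord0))] =
   (fun v : 'rV[R]_1 => v ord0 ord0) @^-1` (g @^-1` S).
  by apply/seteqP; split=> u /= => [[]|] .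
apply: open_comp; last exact: gc.
by move=> x _; apply: coord_continuous.
Qed.

Definition phi (v0 : seq A) (x : Tpt R A) : R :=
  match x with
  | None => if v0 == [::] then 1 else 0
  | Some (w, a, t) => if rcons w a == v0 then sval t
                      else if w == v0 then 1 - sval t else 0
  end.

Lemma vtx_rcons (w : seq A) a : vtx R (rcons w a) = Some (w, a, exist _ 1 (@unit_in R)).
Proof. by case: w => [|x s] //=; rewrite belast_rcons last_rcons. Qed.

Lemma phi_vtx v0 v : phi v0 (vtx R v) = if v == v0 then 1 else 0.
Proof.
case: (lastP v) => [|w a]; first by rewrite /= eq_sym.
rewrite vtx_rcons /=; case: ifP => // _.
case: ifP => // _; exact: subrr.
Qed.

Definition psi v0 (w : seq A) (a : A) (t : R) : R :=
  if rcons w a == v0 then t else if w == v0 then 1 - t else 0.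

Lemma epoint_out (w : seq A) a (t : R) : ~~ (0 < t <= 1) -> epoint w a t = vtx R w.
Proof.
move=> h; rewrite /epoint; case: {-}_ / idP => //.
by move=> h'; rewrite h' in h.
Qed.
Lemma epoint_in (w : seq A) a (t : R) (h : 0 < t <= 1) : epoint w a t = Some (w, a, exist _ t h).
Proof.
rewrite /epoint; case: {-}_ / idP => // h'.
by congr (Some (_, _, _)); apply: eq_exist.
Qed.
Lemma phi_epoint v0 w a t : 0 <= t <= 1 -> phi v0 (epoint w a t) = psi v0 w a t.
Proof.
move=> /andP[t0 t1].
have [h|h] := boolP (0 < t <= 1); first by rewrite (epoint_in _ _ h).
rewrite epoint_out //.
have -> : t = 0.
  apply/eqP; rewrite eq_le t0 andbT; apply: contraNT h.
  by rewrite -ltNge => ->.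
rewrite phi_vtx /psi.
have sz : (rcons w a == v0) -> (w == v0) = false.
  move=> /eqP <-; apply/negbTE/eqP => /(congr1 size); rewrite size_rcons.
  by move=> /eqP; rewrite -[X in X == _]addn0 -addn1 eqn_add2l.
case E1: (rcons w a == v0); first by rewrite sz.
by case: (w == v0); rewrite ?subr0.
Qed.

Lemma psi_cont v0 w a : continuous (psi v0 w a).
Proof.
rewrite /psi; case: (rcons w a == v0); first by move=> ?; apply: cvg_id.
case: (w == v0); last exact: cst_continuous.
move=> x; apply: continuousB; first exact: cst_continuous.
by move=> ?; apply: cvg_id.
Qed.

Lemma phi_open v0 (O : set R) : open O -> T_open (phi v0 @^-1` O).
Proof.
move=> oO w a; exists (psi v0 w a @^-1` O); split.
  by apply: open_comp => // x _; apply: psi_cont.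
by move=> t tI; rewrite /preimage /= phi_epoint.
Qed.

Lemma realize_vtx (g : seq A -> seq A) w a :
  realize g (vtx R (rcons w a)) = vtx R (g (rcons w a)).
Proof.
rewrite vtx_rcons /=.
case: (g (rcons w a)) => [|x s] //.
rewrite lastI rev_rcons /= revK vtx_rcons; congr (Some (_, _, _)).
Qed.

Lemma realize_ext (g1 g2 : seq A -> seq A) :
  (forall w a, realize g1 (vtx R (rcons w a)) = realize g2 (vtx R (rcons w a))) ->
  forall x : Tpt R A, realize g1 x = realize g2 x.
Proof.
move=> H [[[w a] t]|] //; have := H w a; rewrite vtx_rcons /=.
case: (rev (g1 (rcons w a))) => [|b1 r1]; case: (rev (g2 (rcons w a))) => [|b2 r2] //.
by case=> -> ->.
Qed.

Lemma AutT_ext (p q : AutT R A) : sval (sval p) = sval (sval q) -> p = q.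
Proof.
case: p => [[f hf] hp]; case: q => [[f' hf'] hq] /= E; subst f'.
have E : hf = hf' by apply: Prop_irrelevance.
by subst; congr exist; apply: Prop_irrelevance.
Qed.

Lemma plot_eval n (U : set 'rV[R]_n) (P : 'rV[R]_n -> AutT R A) (x : Tpt R A) :
  D_aut U P -> open U /\ @D_T R A n U (fun u => sval (sval (P u)) x).
Proof.
case=> D [isD DP evs]; have [oD cD _ _] := isD.
have oU := oD _ _ _ DP; split=> //.
apply: (evs n U (fun u => (sval (P u), x))); split=> //.
by move=> D' [_ cD' _ _] _; apply: cD'.
Qed.

Lemma open_disj_separated (T : topologicalType) (B0 B1 : set T) :
  open B0 -> open B1 -> B0 `&` B1 = set0 -> separated B0 B1.
Proof.
move=> o0 o1 d; split.
- apply/seteqP; split=> // x [cx Bx].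
  have [y [B0y B1y]] := cx B1 (open_nbhs_nbhs (conj o1 Bx)).
  by have : (B0 `&` B1) y by []; rewrite d.
- apply/seteqP; split=> // x [Bx cx].
  have [y [B1y B0y]] := cx B0 (open_nbhs_nbhs (conj o0 Bx)).
  by have : (B0 `&` B1) y by []; rewrite d.
Qed.

Lemma phi_vals v0 v : phi v0 (vtx R v) = 1 \/ phi v0 (vtx R v) = 0.
Proof. by rewrite phi_vtx; case: ifP; [left|right]. Qed.

Lemma key n (U : set 'rV[R]_n) (P : 'rV[R]_n -> AutT R A) u0 u :
  D_aut U P -> (forall t : R, 0 <= t <= 1 -> U (u0 + t *: (u - u0))) -> P u = P u0.
Proof.
move=> HP HU; apply: AutT_ext.
have [g1 [_ E1]] := svalP (P u); have [g0 [_ E0]] := svalP (P u0).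
apply: funext => x; rewrite E1 E0; apply: realize_ext => w a; rewrite -E1 -E0.
set F := fun u' => sval (sval (P u')) (vtx R (rcons w a)).
have hv : forall u', exists v', F u' = vtx R v'.
  move=> u'; have [g [_ Eg]] := svalP (P u').
  by exists (g (rcons w a)); rewrite /F Eg realize_vtx.
have [oU /D_T_cont [_ cF]] := plot_eval (vtx R (rcons w a)) HP.
have [v0 Fv0] := hv u0.
pose L := fun t : R => u0 + t *: (u - u0).
have cL : continuous L.
  move=> t; have h := @continuousD _ _ _ (fun=> u0) (fun t : R => t *: (u - u0)) t.
  have h1 : {for t, continuous (fun _ : R => u0)} by apply: cst_continuous.
  have h2 : {for t, continuous (fun t : R => t *: (u - u0))}.
    by apply: continuousZl; apply: cvg_id.
  exact: (h h1 h2).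
have oA0 := cF _ (phi_open v0 (@open_gt R (1/2))).
have oA1 := cF _ (phi_open v0 (@open_lt R (1/2))).
set A0 := [set _ | _] in oA0; set A1 := [set _ | _] in oA1.
have oB0 : open (L @^-1` A0) by apply: open_comp => // t _; apply: cL.
have oB1 : open (L @^-1` A1) by apply: open_comp => // t _; apply: cL.
have dB : (L @^-1` A0) `&` (L @^-1` A1) = set0.
  apply/seteqP; split=> // t [[_ h0] [_ h1]].
  by move: h0 h1; rewrite /preimage /= => h0 h1; have := lt_trans h0 h1; rewrite ltxx.
have half : (1 / 2 : R) < 1 by rewrite ltr_pdivrMr // mul1r ltr1n.
have half0 : (0 : R) < 1 / 2 by rewrite divr_gt0.
have cov : `[0, 1] `<=` (L @^-1` A0) `|` (L @^-1` A1).
  move=> t /=; rewrite in_itv /= => tI.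
  have Ut := HU t tI; have [v' Fv'] := hv (L t).
  have [h|h] := phi_vals v0 v'.
    by left; split=> //; rewrite /preimage /= -/(F (L t)) Fv' h.
  by right; split=> //; rewrite /preimage /= -/(F (L t)) Fv' h.
have L0 : L 0 = u0 by rewrite /L scale0r addr0.
have L1 : L 1 = u by rewrite /L scale1r addrC subrK.
have [sub|sub] := connected_subset (open_disj_separated oB0 oB1 dB) cov
  (@segment_connected R 0 1).
- have : (L @^-1` A0) 1 by apply: sub; rewrite /= in_itv /= lexx ler01.
  rewrite /preimage /= L1 => -[_]; rewrite /preimage /= -/(F u).
  have [v' Fv'] := hv u; rewrite Fv' phi_vtx.
  case: ifP => [/eqP -> _|_]; last by rewrite ltNge (ltW half0).
  by rewrite -/(F u0) Fv0.
- have : (L @^-1` A1) 0 by apply: sub; rewrite /= in_itv /= lexx ler01.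
  rewrite /preimage /= L0 => -[_]; rewrite /preimage /= -/(F u0) Fv0 phi_vtx eqxx.
  by rewrite ltNge (ltW half).
Qed.

Lemma ball_seg n (u0 u : 'rV[R]_n) (e : R) (t : R) :
  ball u0 e u -> 0 <= t <= 1 -> ball u0 e (u0 + t *: (u - u0)).
Proof.
rewrite -!ball_normE /ball_ /= => bu /andP[t0 t1].
rewrite opprD addrA subrr add0r normrN normrZ ger0_norm //.
apply: le_lt_trans bu; rewrite -normrN opprB.
by rewrite -[X in _ <= X]mul1r ler_wpM2r.
Qed.

End Main.

Theorem mainTheorem6 (R : realType) (A : finType) (hp : (2 <= #|A|)%N) :
  forall S : set (AutT R A), D_open (D_aut (A:=A)) S.
Proof.
move=> S n U P HP.
have [oU _] := plot_eval None HP.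
rewrite openE => u0 [Uu0 Su0].
have : nbhs u0 U by apply: open_nbhs_nbhs.
move/nbhs_ballP => [e e0 sub].
apply/nbhs_ballP; exists e => // u bu.
have Pu : P u = P u0.
  apply: (key HP) => t tI; apply: sub; exact: ball_seg.
by split; [apply: sub | rewrite Pu].
Qed.
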